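(* Let $(X,\|\cdot\|_X)$ be a Banach space, $\mathcal{K}\subset X$ compact, and $\gamma_n=C'n^\delta\lambda^n$ with fixed $\delta\in\mathbb{R}$, $\lambda>1$, $C'>0$. (i) If for some constants $c_1>0$, $\alpha>0$, $\beta\in\mathbb{R}$ we have $\varepsilon_n(\mathcal{K})_X>c_1\frac{(\log_2n)^\beta}{n^\alpha}$ for all $n\ge2$, then there exists $C>0$ such that $d_n^{\gamma_n}(\mathcal{K})_X\ge C\frac{(\log_2n)^\beta}{n^{2\alpha}}$ for all $n\ge2$. (ii) If for some constants $c_1>0$, $\alpha>0$ we have $\varepsilon_n(\mathcal{K})_X>c_1(\log_2n)^{-\alpha}$ for all $n\ge2$, then there exists $C>0$ such that $d_n^{\gamma_n}(\mathcal{K})_X\ge C(\log_2n)^{-\alpha}$ for all $n\ge2$.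
   Context: For $m\ge0$, the entropy number $\varepsilon_m(\mathcal{K})_X$ is the infimum of all $\varepsilon>0$ such that $\mathcal{K}$ is covered by $2^m$ closed balls of radius $\varepsilon$ with centers in $X$. For $k\ge1$ and a norm $\|\cdot\|_{Y_k}$ on $\mathbb{R}^k$ let $B_{Y_k}=\{y\in\mathbb{R}^k:\|y\|_{Y_k}\le1\}$; for $\gamma\ge0$, $d^\gamma(\mathcal{K},Y_k)_X=\inf_{\Phi}\sup_{f\in\mathcal{K}}\inf_{y\in B_{Y_k}}\|f-\Phi(y)\|_X$, the infimum over all maps $\Phi:B_{Y_k}\to X$ with $\|\Phi(y)-\Phi(y')\|_X\le\gamma\|y-y'\|_{Y_k}$; and the Lipschitz width is $d_n^\gamma(\mathcal{K})_X=\inf_{1\le k\le n}\inf_{\|\cdot\|_{Y_k}}d^\gamma(\mathcal{K},Y_k)_X$, the inner infimum over all norms on $\mathbb{R}^k$. *)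

(* Defs.v *)
From HB Require Import structures.
From mathcomp Require Import all_boot all_order all_algebra.
From mathcomp Require Import all_classical all_reals all_analysis.
Set Implicit Arguments. Unset Strict Implicit. Unset Printing Implicit Defensive.
Import Order.TTheory GRing.Theory Num.Theory.
Import numFieldNormedType.Exports.
Local Open Scope classical_set_scope.
Local Open Scope ring_scope.

Definition is_norm (R : realType) (k : nat) (N : 'rV[R]_k -> R) : Prop :=
  [/\ (forall y, 0 <= N y),
      (forall y, N y = 0 -> y = 0),
      (forall (a : R) y, N (a *: y) = `|a| * N y) &
      (forall y z, N (y + z) <= N y + N z)].

Definition entropy_number (R : realType) (X : normedModType R)
    (K : set X) (m : nat) : R :=
  inf [set eps : R | 0 < eps /\
        exists c : 'I_(2 ^ m) -> X,
          forall f, K f -> exists i, `|f - c i| <= eps].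

Definition unit_ball (R : realType) (k : nat) (N : 'rV[R]_k -> R) :
  set 'rV[R]_k := [set y | N y <= 1].

(* d^gamma(K, Y_k)_X: Phi is a map B_{Y_k} -> X (represented by a total
   function whose values outside the ball are irrelevant) that is
   gamma-Lipschitz on the ball. *)
Definition lip_width_fixed (R : realType) (X : normedModType R)
    (K : set X) (gamma : R) (k : nat) (N : 'rV[R]_k -> R) : R :=
  inf [set d : R | exists Phi : 'rV[R]_k -> X,
        (forall y y', unit_ball N y -> unit_ball N y' ->
            `|Phi y - Phi y'| <= gamma * N (y - y')) /\
        d = sup [set e : R | exists2 f, K f &
                   e = inf [set t : R | exists2 y, unit_ball N y &
                                          t = `|f - Phi y|]]].

Definition lip_width (R : realType) (X : normedModType R)
    (K : set X) (gamma : R) (n : nat) : R :=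
  inf [set d : R | exists k : nat, (1 <= k <= n)%N /\
        exists N : 'rV[R]_k -> R, is_norm N /\ d = lip_width_fixed K gamma N].

Definition log2 (R : realType) (x : R) : R := ln x / ln 2.

(* Main.v *)
Require Import Defs.
From HB Require Import structures.
From mathcomp Require Import all_boot all_order all_algebra.
From mathcomp Require Import fingroup perm.
From mathcomp Require Import all_classical all_reals all_analysis.
From mathcomp Require Import ring lra.
Import Order.TTheory GRing.Theory Num.Theory.
Import numFieldNormedType.Exports.
Local Open Scope classical_set_scope.
Local Open Scope ring_scope.

Section Helpers.
Set Implicit Arguments. Unset Strict Implicit. Unset Printing Implicit Defensive.

Lemma entry_le_norm (R : realType) k (x : 'rV[R]_k) i : `|x 0 i| <= `|x|.
Proof.
rewrite [X in _ <= X]/Num.norm /= mx_normrE.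
exact: (le_bigmax _ (fun ij : 'I_1 * 'I_k => `|x ij.1 ij.2|) (0, i)).
Qed.

Lemma norm_sum_le (R : realType) k (N : 'rV[R]_k -> R) (I : finType) (F : I -> 'rV[R]_k) :
  is_norm N -> N (\sum_i F i) <= \sum_i N (F i).
Proof.
case=> N0 Neq NZ ND.
have Nz : N 0 = 0 by rewrite -(scale0r 0) NZ normr0 mul0r.
elim/big_ind2: _ => //; first by rewrite Nz.
by move=> x1 x2 y1 y2 h1 h2; apply: (le_trans (ND _ _)); apply: lerD.
Qed.

Lemma norm_upper (R : realType) k (N : 'rV[R]_k -> R) :
  is_norm N -> forall x, N x <= `|x| * \sum_i N ('e_i).
Proof.
move=> hN x; have [N0 Neq NZ ND] := hN.
rewrite {1}(row_sum_delta x) mulr_sumr.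
apply: (le_trans (norm_sum_le _ hN)); apply: ler_sum => i _.
rewrite NZ; apply: ler_wpM2r => //; exact: entry_le_norm.
Qed.

Lemma norm_lip (R : realType) k (N : 'rV[R]_k -> R) :
  is_norm N -> forall x y, `|N x - N y| <= `|x - y| * \sum_i N ('e_i).
Proof.
move=> hN x y; have [N0 Neq NZ ND] := hN.
have h1 : forall a b, N a - N b <= N (a - b).
  move=> a b; rewrite lerBlDr; apply: le_trans (ND _ _); by rewrite subrK.
rewrite ler_norml; apply/andP; split; last first.
  exact: le_trans (h1 _ _) (norm_upper hN _).
rewrite lerNl opprB; apply: le_trans (h1 _ _) _.
have -> : y - x = (-1) *: (x - y) by rewrite scaleN1r opprB.
by rewrite NZ normrN normr1 mul1r norm_upper.
Qed.

Lemma norm_cont (R : realType) k (N : 'rV[R]_k -> R) :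
  is_norm N -> continuous N.
Proof.
move=> hN x; have FF : ProperFilter (nbhs x) by apply: nbhs_pfilter.
apply/cvgrPdist_le => e e0.
set B := \sum_i N ('e_i : 'rV[R]_k).
have B0 : 0 <= B by apply: sumr_ge0 => i _; case: hN.
have eB : 0 < e / (B + 1) by rewrite divr_gt0 // ltr_wpDl.
near=> y.
apply: le_trans (norm_lip hN x y) _.
have : `|x - y| <= e / (B + 1) by near: y; apply: cvgr_dist_le => //; exact: cvg_id.
move=> h; apply: le_trans (ler_wpM2r B0 h) _.
rewrite mulrAC ler_pdivrMr ?ltr_wpDl // ler_wpM2l ?ltW //.
by rewrite ltrDl.
Unshelve. all: by end_near. Qed.

Lemma sphere_compact (R : realType) k : compact [set x : 'rV[R]_k | `|x| = 1].
Proof.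
apply: bounded_closed_compact.
  by exists 1; split => // M M1 x /= ->; exact: ltW.
have := @closed_eq R 1.
apply: (proj1 (continuous_closedP _)).
exact: norm_continuous.
Qed.

Lemma norm_lower (R : realType) k (N : 'rV[R]_k -> R) :
  is_norm N -> exists2 a, 0 < a & forall x, a * `|x| <= N x.
Proof.
move=> hN; have [N0 Neq NZ ND] := hN.
have key : forall a, (forall u, `|u| = 1 -> a <= N u) -> forall x, a * `|x| <= N x.
  move=> a ha x; have [->|x0] := eqVneq x 0; first by rewrite normr0 mulr0.
  have nx : 0 < `|x| by rewrite normr_gt0.
  have -> : N x = `|x| * N (`|x|^-1 *: x).
    by rewrite -{1}(normr_id x) -NZ scalerA divff ?scale1r // gt_eqF.
  rewrite mulrC; apply: ler_wpM2l; first exact: ltW.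
  apply: ha; rewrite normrZ normfV normr_id mulVf // gt_eqF //.
have [[u0 hu0]|] := pselect ([set x : 'rV[R]_k | `|x| = 1] !=set0).
  have [|c cA hc] := @compact_EVT_min _ _ N _ (ex_intro _ u0 hu0) (@sphere_compact R k).
    by apply: continuous_subspaceT; exact: norm_cont.
  rewrite inE /= in cA.
  exists (N c).
    rewrite lt_neqAle N0 andbT; apply/eqP => /esym /Neq c0.
    by move: cA; rewrite c0 normr0 => /eqP; rewrite eq_sym oner_eq0.
  by apply: key => u hu; apply: hc; rewrite inE.
move=> hne; exists 1 => //; apply: key => u hu; exfalso; apply: hne; by exists u.
Qed.

Lemma det_bound (R : realType) k (b : R) : exists ub : R, forall (M : 'M[R]_k),
  (forall i j, `|M i j| <= b) -> `|\det M| <= ub.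
Proof.
exists (\sum_(s : 'S_k) b ^+ k) => M hb; rewrite /determinant; apply: le_trans (ler_norm_sum _ _ _) _.
apply: ler_sum => s _; rewrite normrM normrX normrN normr1 expr1n mul1r normr_prod.
have -> : b ^+ k = \prod_(i < k) b by rewrite prodr_const card_ord.
by apply: ler_prod => i _; rewrite normr_ge0 hb.
Qed.

Lemma cramer_row (R : realType) k (M : 'M[R]_k) (y : 'rV[R]_k) i : M \in unitmx ->
  \det (\matrix_(r, j) if r == i then y 0 j else M r j) = (y *m invmx M) 0 i * \det M.
Proof.
move=> hU.
set M' := \matrix_(r, j) _.
rewrite (expand_det_row M' i).
have cof : forall j, cofactor M' i j = cofactor M i j.
  move=> j; rewrite /cofactor; congr (_ * \det _).
  apply/matrixP => r s; rewrite !mxE.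
  by rewrite eq_sym (negbTE (neq_lift i r)).
rewrite /invmx hU !mxE mulr_suml.
apply: eq_bigr => j _.
rewrite cof !mxE eqxx -!mulrA; congr (_ * _).
rewrite mulrC -!mulrA mulfV ?mulr1 //.
by move: hU; rewrite unitmxE unitfE.
Qed.

Lemma auerbach (R : realType) k (N : 'rV[R]_k -> R) : is_norm N ->
  exists M : 'M[R]_k, (forall i, N (row i M) <= 1) /\
    forall y, N y <= 1 -> exists c : 'rV[R]_k, y = c *m M /\ forall i, `|c 0 i| <= 2.
Proof.
move=> hN; have [N0 Neq NZ ND] := hN.
have [a a0 ha] := norm_lower hN.
pose DS := [set d : R | exists M : 'M[R]_k, (forall i, N (row i M) <= 1) /\ d = `|\det M|].
have [ub hub] := det_bound k a^-1.
have ent : forall M : 'M[R]_k, (forall i, N (row i M) <= 1) -> forall i j, `|M i j| <= a^-1.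
  move=> M hM i j.
  have -> : M i j = row i M 0 j by rewrite mxE.
  apply: le_trans (entry_le_norm _ _) _.
  rewrite -(ler_pM2l a0) mulfV ?gt_eqF //; exact: le_trans (ha _) (hM i).
have eN : forall i : 'I_k, 0 < N 'e_i.
  move=> i; rewrite lt_neqAle N0 andbT; apply/eqP => /esym /Neq /matrixP /(_ 0 i).
  by rewrite !mxE !eqxx /= => /eqP; rewrite oner_eq0.
pose d := \row_i (N 'e_i)^-1.
have M0 : DS `|\det (diag_mx d)|.
  exists (diag_mx d); split => // i.
  by rewrite row_diag_mx NZ mxE ger0_norm ?invr_ge0 ?(ltW (eN i)) // mulVf ?gt_eqF.
have d0 : 0 < `|\det (diag_mx d)|.
  rewrite det_diag normr_gt0 prodf_seq_neq0; apply/allP => i _ /=.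
  by rewrite mxE invr_eq0 gt_eqF.
have hs : has_sup DS.
  split; first by exists `|\det (diag_mx d)|.
  by exists ub => _ [M [hM ->]]; apply: hub; apply: ent.
have s0 : 0 < sup DS by apply: lt_le_trans d0 (sup_upper_bound hs M0).
have [_ [M [hM ->]] hMs] := sup_adherent (divr_gt0 s0 (ltr0n R 2)) hs.
have hMs' : sup DS < 2 * `|\det M|.
  move: hMs; rewrite {1}(splitr (sup DS)) addrK => h.
  by rewrite -ltr_pdivrMl // mulrC.
have dM0 : 0 < `|\det M|.
  by rewrite -(pmulr_rgt0 _ (ltr0n R 2)); apply: lt_trans s0 hMs'.
have hU : M \in unitmx by rewrite unitmxE unitfE -normr_gt0.
exists M; split => // y hy.
exists (y *m invmx M); split; first by rewrite mulmxKV.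
move=> i.
set M' := \matrix_(r, j) if r == i then y 0 j else M r j.
have hM' : DS `|\det M'|.
  exists M'; split => // r.
  have [->|ri] := eqVneq r i.
    suff -> : row i M' = y by [].
    by apply/rowP => j; rewrite !mxE eqxx.
  suff -> : row r M' = row r M by [].
  by apply/rowP => j; rewrite !mxE (negbTE ri).
have := sup_upper_bound hs hM'.
rewrite /M' cramer_row // normrM => h.
rewrite -(ler_pM2r dM0); apply: ltW; exact: le_lt_trans h hMs'.
Qed.

Definition gridpt (R : realType) k p (t : 'I_k -> nat) : 'rV[R]_k :=
  \row_i ((t i)%:R / 2 ^+ p - 2).

Lemma grid (R : realType) k (N : 'rV[R]_k -> R) (M : 'M[R]_k) (p : nat) :
  is_norm N -> (forall i, N (row i M) <= 1) ->
  forall c : 'rV[R]_k, (forall i, `|c 0 i| <= 2) ->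
  exists t : {ffun 'I_k -> 'I_(2 ^ (p + 3))},
    N (c *m M - @gridpt R k p (fun i => t i) *m M) <= k%:R / 2 ^+ p.
Proof.
move=> hN hM c hc.
have hN' := hN; case: hN' => N0 Neq NZ ND.
have P0 : (0 : R) < 2 ^+ p by apply: exprn_gt0.
pose x i := (c 0 i + 2) * 2 ^+ p.
have x0 : forall i, 0 <= x i.
  move=> i; apply: mulr_ge0; last exact: ltW.
  by rewrite -lerBlDr sub0r; move: (hc i); rewrite ler_norml => /andP[].
have xlt : forall i, (Num.Def.trunc (x i) < 2 ^ (p + 3))%N.
  move=> i; rewrite truncn_lt_nat // natrX exprD /x mulrC ltr_pM2l //.
  move: (hc i); rewrite ler_norml => /andP[_ h]; lra.
exists [ffun i => Ordinal (xlt i)].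
rewrite -mulmxBl mulmx_sum_row.
apply: le_trans (norm_sum_le _ hN) _.
have -> : k%:R / 2 ^+ p = \sum_(i < k) (1 / 2 ^+ p : R).
  by rewrite sumr_const card_ord mul1r -[RHS]mulr_natl.
apply: ler_sum => i _; rewrite NZ.
rewrite -[X in _ <= X]mulr1; apply: ler_pM => //.
rewrite !mxE ffunE /=.
have := truncn_itv (x0 i); set T := (Num.Def.trunc (x i))%:R => /andP[h1 h2].
have -> : c 0 i - (T / 2 ^+ p - 2) = (x i - T) / 2 ^+ p.
  rewrite /x; field; exact: lt0r_neq0.
rewrite ger0_norm; last by apply: divr_ge0; [rewrite subr_ge0|exact: ltW].
rewrite ler_pM2r ?invr_gt0 //; move: h2; rewrite -natr1 /T; lra.
Qed.

Lemma mxnorm_is_norm (R : realType) k : is_norm (fun y : 'rV[R]_k => `|y|).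
Proof.
split; [exact: normr_ge0 | exact: normr0_eq0 | exact: normrZ | exact: ler_normD].
Qed.

Lemma core (R : realType) (X : normedModType R) (K : set X) (gam : R) (n p : nat) :
  compact K -> 0 <= gam -> (1 <= n)%N ->
  entropy_number K (n * (p + 3)) <=
    Num.max (lip_width K gam n + 2 * n%:R * gam / 2 ^+ p) 0.
Proof.
move=> cK g0 n1.
set D := lip_width K gam n.
set E := 2 * n%:R * gam / 2 ^+ p.
apply/ler_addgt0Pr => eta eta0.
have -> : Num.max (D + E) 0 + eta = Num.max (D + E + eta) eta.
  by rewrite real_addr_maxl ?num_real // add0r.
pose e3 := eta / 3.
have e30 : 0 < e3 by rewrite divr_gt0.
have [d [k [/andP[k1 kn] [N [hN ->]]]] hd] : exists2 d, (exists k : nat, (1 <= k <= n)%N /\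
        exists N : 'rV[R]_k -> R, is_norm N /\ d = lip_width_fixed K gam N) & d < D + e3.
  apply: inf_lt; last by rewrite ltrDl.
  exists (lip_width_fixed K gam (fun y : 'rV[R]_1 => `|y|)).
  exists 1%N; split; first exact: n1.
  by exists (fun y : 'rV[R]_1 => `|y|); split => //; exact: mxnorm_is_norm.
have hN' := hN; case: hN' => N0 Neq NZ ND.
have Nz : N 0 = 0 by rewrite -(scale0r 0) NZ normr0 mul0r.
move: hd; rewrite /lip_width_fixed => hd.
have [|_ [Phi [hPhi ->]] hu] := inf_lt _ hd.
  exists (sup [set e : R | exists2 f, K f &
                   e = inf [set t : R | exists2 y, unit_ball N y &
                                          t = `|f - (fun=> 0 : X) y|]]).
  exists (fun=> 0); split => // y y' _ _.
  by rewrite subrr normr0 mulr_ge0.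
have [B [_ hB]] := compact_bounded cK.
have KB : forall f, K f -> `|f| <= B + 1 by move=> f; apply: hB; rewrite ltrDl.
have ball0 : unit_ball N 0 by rewrite /unit_ball /= Nz.
have step3 : forall f, K f -> exists2 y, unit_ball N y & `|f - Phi y| < D + e3 + e3.
  move=> f Kf.
  set W := [set t | exists2 y : 'rV_k, unit_ball N y & t = `|f - Phi y|].
  have W0 : W !=set0 by exists `|f - Phi 0|; exists 0.
  have Wlb : has_lbound W by exists 0 => _ [y _ ->].
  have Wle : inf W <= `|f - Phi 0| by apply: ge_inf => //; exists 0.
  have ef : inf W <= D + e3.
    apply/ltW; apply: le_lt_trans hu; apply: sup_upper_bound; last by exists f.
    split; first by exists (inf W); exists f.
    exists (B + 1 + `|Phi 0|) => _ [g Kg ->].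
    apply: le_trans (ge_inf _ _) _.
    - by exists 0 => _ [y _ ->].
    - by exists 0.
    apply: le_trans (ler_normB _ _) _; exact: lerD (KB _ Kg) (lexx _).
  have hlt0 : inf W < inf W + e3 by rewrite ltrDl.
  have [|_ [y hy ->] hlt] := inf_lt _ hlt0.
    exact: W0.
  exists y => //; apply: lt_le_trans hlt _; exact: lerD ef (lexx _).
have [M [hM hMc]] := auerbach hN.
pose L := (2 ^ (p + 3))%N.
pose z (t : {ffun 'I_k -> 'I_L}) := @gridpt R k p (fun i => t i) *m M.
pose r : R := k%:R / 2 ^+ p.
pose sel (t : {ffun 'I_k -> 'I_L}) := xget 0 [set y' | unit_ball N y' /\ N (y' - z t) <= r].
have card : (#|{: {ffun 'I_k -> 'I_L}}| <= 2 ^ (n * (p + 3)))%N.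
  rewrite card_ffun !card_ord /L -expnM mulnC leq_pexp2l //.
  by rewrite leq_mul2r kn orbT.
pose c (i : 'I_(2 ^ (n * (p + 3)))) : X :=
  oapp (fun j : 'I_#|{: {ffun 'I_k -> 'I_L}}| => Phi (sel (enum_val j))) 0 (insub (val i)).
have Sin : [set eps : R | 0 < eps /\
        exists c : 'I_(2 ^ (n * (p + 3))) -> X,
          forall f, K f -> exists i, `|f - c i| <= eps] (Num.max (D + E + eta) eta).
  split; first by rewrite lt_max eta0 orbT.
  exists c => f Kf.
  have [y hy hfy] := step3 f Kf.
  have [cc [ycc hcc]] := hMc y hy.
  have [t ht] := grid p hN hM hcc.
  rewrite -ycc in ht.
  have hsel : unit_ball N (sel t) /\ N (sel t - z t) <= r.
    by apply: (@xgetPex _ 0 [set y' | unit_ball N y' /\ N (y' - z t) <= r]); exists y.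
  exists (widen_ord card (enum_rank t)).
  rewrite /c /= valK /= enum_rankK.
  apply: le_trans (ler_distD (Phi y) _ _) _.
  have h1 : `|Phi y - Phi (sel t)| <= gam * (r + r).
    apply: le_trans (hPhi _ _ hy hsel.1) _; apply: (ler_wpM2l g0).
    have -> : y - sel t = (y - z t) + (z t - sel t) by rewrite addrA subrK.
    apply: le_trans (ND _ _) _; apply: lerD => //.
    have -> : z t - sel t = (-1) *: (sel t - z t) by rewrite scaleN1r opprB.
    by rewrite NZ normrN normr1 mul1r; exact: hsel.2.
  have P0 : (2 : R) ^+ p != 0 by rewrite expf_neq0 // pnatr_eq0.
  have h2 : gam * (r + r) = 2 * k%:R * gam / 2 ^+ p by rewrite /r; field.
  have kE : 2 * k%:R * gam / 2 ^+ p <= E.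
    by rewrite /E ler_wpM2r ?invr_ge0 ?exprn_ge0 // ler_wpM2r // ler_wpM2l // ler_nat.
  have e3E : e3 + e3 + e3 = eta by rewrite /e3; field.
  rewrite le_max; apply/orP; left.
  move: hfy h1; rewrite h2; lra.
apply: ge_inf => //; exists 0 => _ [] /ltW //.
Qed.

Lemma ln_lhs (R : realType) (C' d l : R) (n q : nat) : 0 < C' -> 0 < l -> (0 < n)%N ->
  ln (2 * n%:R * (C' * n%:R `^ d * l ^+ n) / 2 ^+ (q * n)) =
  ln 2 + ln n%:R + ln C' + d * ln n%:R + n%:R * ln l - (q * n)%:R * ln 2.
Proof.
move=> C0 l0 n0.
have n0' : (0 : R) < n%:R by rewrite ltr0n.
have p2 : forall m, (0:R) < 2 ^+ m by move=> m; apply: exprn_gt0.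
rewrite ln_div ?posrE; last 2 first.
- by rewrite !mulr_gt0 ?powR_gt0 ?exprn_gt0.
- exact: p2.
have h2 : (0:R) < 2 by rewrite ltr0n.
have hp := powR_gt0 d n0'.
have hl := exprn_gt0 n l0.
have a1 : (0:R) < 2 * n%:R := mulr_gt0 h2 n0'.
have a2 : (0:R) < C' * n%:R `^ d := mulr_gt0 C0 hp.
have a3 : (0:R) < C' * n%:R `^ d * l ^+ n := mulr_gt0 a2 hl.
have P x : (0:R) < x -> x \in Num.pos by rewrite posrE.
rewrite (lnM (P _ a1) (P _ a3)).
rewrite (lnM (P _ h2) (P _ n0')).
rewrite (lnM (P _ a2) (P _ hl)) (lnM (P _ C0) (P _ hp)).
rewrite ln_powR (lnXn _ h2) (lnXn _ l0).
rewrite !mulr_natl. ring.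
Qed.

Lemma ar2 (R : realFieldType) (A1 A2 Q : R) :
  0 <= A1 -> 0 <= A2 -> 2 * A1 + 2 * A2 <= Q -> 0 <= Q - A1.
Proof. move=> *; lra. Qed.

Lemma final_arith (R : realFieldType) (l2 x lC lc d s lm lq nL nQ nab A0 A1 A2 se Q : R) :
  s * lm <= s * lq + 2 * (s * x) ->
  x + d * x + 2 * (s * x) <= nab ->
  l2 + lC - lc <= A0 ->
  s * lq <= Q / 2 + 3 * l2 / 2 + se ->
  2 * (Q - A1) <= nQ - nab - nL ->
  2 * A1 + 2 * A2 <= Q ->
  A2 = A0 + 3 * l2 / 2 + se -> 0 <= A1 -> 0 <= A2 ->
  l2 + x + lC + d * x + nL - nQ <= lc + - s * lm.
Proof. move=> *; lra. Qed.

Lemma AN (R : realType) (C' d l c s : R) : 0 < C' -> 1 < l -> 0 < c -> 0 <= s ->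
  exists q : nat, forall n : nat, (2 <= n)%N ->
   2 * n%:R * (C' * n%:R `^ d * l ^+ n) / 2 ^+ (q * n) <= c * ((n * (q * n + 3))%:R) `^ (- s).
Proof.
move=> C0 l1 c0 s0.
have h2 : (0:R) < 2 by rewrite ltr0n.
have P x : (0:R) < x -> x \in Num.pos by rewrite posrE.
have ln2 : 0 < ln (2 : R) by apply: ln_gt0; rewrite ltr1n.
have l0 : 0 < l by apply: lt_trans l1; rewrite ltr01.
have lnl : 0 <= ln l by apply: ln_ge0; exact: ltW.
pose eps := ln (2:R) / (2 * (s + 1)).
have eps0 : 0 < eps by rewrite divr_gt0 // mulr_gt0 // ltr_wpDl.
pose A0 := `|ln 2 + ln C' - ln c|.
pose A1 := `|1 + d + 2 * s| + ln l.
pose A2 := A0 + 3 * ln 2 / 2 + s * `|ln eps|.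
have A10 : 0 <= A1 by rewrite addr_ge0.
have A20 : 0 <= A2.
  apply: addr_ge0; last by apply: mulr_ge0 s0 (normr_ge0 _).
  apply: addr_ge0; first exact: normr_ge0.
  apply: divr_ge0; last exact: ltW.
  by apply: mulr_ge0; [rewrite ler0n | exact: ltW].
pose q := (Num.Def.trunc ((2 * A1 + 2 * A2) / ln 2)).+1.
have hq : 2 * A1 + 2 * A2 <= q%:R * ln 2.
  rewrite -ler_pdivrMr //; apply: ltW; exact: truncnS_gt.
exists q => n n2.
have n0 : (0 < n)%N by apply: leq_trans n2.
have n0' : (0 : R) < n%:R by rewrite ltr0n.
have n2' : (2 : R) <= n%:R by rewrite ler_nat.
set m := (n * (q * n + 3))%N.
have m0 : (0:R) < m%:R by rewrite ltr0n muln_gt0 n0 addn_gt0 orbT.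
have hp := powR_gt0 d n0'.
have hl := exprn_gt0 n l0.
have a1 : (0:R) < 2 * n%:R := mulr_gt0 h2 n0'.
have a2 : (0:R) < C' * n%:R `^ d := mulr_gt0 C0 hp.
have a3 : (0:R) < C' * n%:R `^ d * l ^+ n := mulr_gt0 a2 hl.
have a4 : (0:R) < 2 * n%:R * (C' * n%:R `^ d * l ^+ n) / 2 ^+ (q * n).
  by apply: divr_gt0; [exact: mulr_gt0 a1 a3 | exact: exprn_gt0].
have b0 : 0 < c * m%:R `^ (- s) by apply: mulr_gt0 c0 (powR_gt0 _ m0).
rewrite -(ler_ln (P _ a4) (P _ b0)) ln_lhs // (lnM (P _ c0) (P _ (powR_gt0 _ m0))) ln_powR.
have F1 : 0 <= ln (n%:R : R) by apply: ln_ge0; rewrite ler1n.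
have F1' : ln (n%:R : R) <= n%:R by apply: ltW; exact: ln_sublinear.
have q3 : (0:R) < (q + 3)%:R by rewrite ltr0n addn_gt0 orbT.
have F2 : ln (m%:R : R) <= ln ((q + 3)%:R : R) + 2 * ln (n%:R : R).
  have nn : (0:R) < n%:R * n%:R := mulr_gt0 n0' n0'.
  have -> : 2 * ln (n%:R : R) = ln n%:R + ln n%:R by ring.
  rewrite -(lnM (P _ n0') (P _ n0')) -(lnM (P _ q3) (P _ nn)).
  rewrite (ler_ln (P _ m0) (P _ (mulr_gt0 q3 nn))) -!natrM ler_nat /m.
  rewrite mulnDr mulnDl mulnCA leq_add2l mulnC leq_mul2l /= leq_pmulr //.
have F3 : s * ln ((q + 3)%:R : R) <= (q + 3)%:R * (ln 2 / 2) + s * `|ln eps|.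
  have e1 := ln_sublinear (mulr_gt0 q3 eps0).
  rewrite (lnM (P _ q3) (P _ eps0)) in e1.
  have e2 : s * eps <= ln 2 / 2.
    have -> : s * eps = (ln 2 / 2) * (s / (s + 1)).
      rewrite /eps; field; apply: lt0r_neq0; exact: ltr_wpDl.
    apply: ler_piMr; first by apply: divr_ge0; [exact: ltW | rewrite ler0n].
    by rewrite ler_pdivrMr ?mul1r ?lerDl ?ler01 // ltr_wpDl.
  have e3 : s * ln ((q + 3)%:R : R) <= s * ((q + 3)%:R * eps - ln eps).
    by apply: (ler_wpM2l s0); apply: ltW; rewrite ltrBrDr.
  have e4 : (q + 3)%:R * (s * eps) <= (q + 3)%:R * (ln 2 / 2) by apply: (ler_wpM2l (ltW q3)).
  have e5 : s * (- ln eps) <= s * `|ln eps| by apply: (ler_wpM2l s0); rewrite -normrN ler_norm.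
  have e6 : s * ((q + 3)%:R * eps - ln eps) = (q + 3)%:R * (s * eps) + s * (- ln eps) by ring.
  by apply: le_trans e3 _; rewrite e6; exact: lerD e4 e5.
have G1 : s * ln (m%:R : R) <= s * ln ((q + 3)%:R : R) + 2 * (s * ln (n%:R : R)).
  have e : s * (ln ((q + 3)%:R : R) + 2 * ln (n%:R : R)) = s * ln ((q + 3)%:R : R) + 2 * (s * ln (n%:R : R)) by ring.
  rewrite -e; exact: (ler_wpM2l s0).
have G2 : ln (n%:R : R) + d * ln (n%:R : R) + 2 * (s * ln (n%:R : R)) <= n%:R * `|1 + d + 2 * s|.
  have e : (1 + d + 2 * s) * ln (n%:R : R) = ln (n%:R : R) + d * ln (n%:R : R) + 2 * (s * ln (n%:R : R)) by ring.
  rewrite -e [X in _ <= X]mulrC; apply: le_trans (ler_wpM2r F1 (ler_norm _)) _.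
  exact: (ler_wpM2l (normr_ge0 _) F1').
have G3 : ln 2 + ln C' - ln c <= A0 by exact: ler_norm.
have G4 : (q * n)%:R * ln (2:R) = n%:R * (q%:R * ln 2) by rewrite natrM; ring.
have G5 : 2 * (q%:R * ln 2 - A1) <= n%:R * (q%:R * ln 2) - n%:R * `|1 + d + 2 * s| - n%:R * ln l.
  have e : n%:R * (q%:R * ln 2 - A1) = n%:R * (q%:R * ln (2:R)) - n%:R * `|1 + d + 2 * s| - n%:R * ln l.
    by rewrite /A1; ring.
  rewrite -e; apply: (ler_wpM2r _ n2'); exact: ar2 A10 A20 hq.
have G7 : (q + 3)%:R * (ln (2:R) / 2) = q%:R * ln 2 / 2 + 3 * ln 2 / 2 by rewrite natrD; ring.
rewrite G7 in F3; rewrite G4.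
exact: (final_arith G1 G2 G3 F3 G5 hq (erefl A2) A10 A20).
Qed.

Lemma powRE' (R : realType) (x b : R) : 0 < x -> x `^ b = expR (b * ln x).
Proof. by move=> x0; rewrite /powR gt_eqF. Qed.

Lemma log2_ge1 (R : realType) (m : nat) : (2 <= m)%N -> 1 <= log2 (m%:R : R).
Proof.
move=> m2.
have ln2 : 0 < ln (2 : R) by apply: ln_gt0; rewrite ltr1n.
have P x : (0:R) < x -> x \in Num.pos by rewrite posrE.
rewrite /log2 ler_pdivlMr // mul1r ler_ln ?posrE ?ltr0n //; last exact: leq_trans m2.
by rewrite ler_nat.
Qed.

Lemma log2_le (R : realType) (m : nat) : (2 <= m)%N -> log2 (m%:R : R) <= m%:R.
Proof.
move=> m2.
have ln2 : 0 < ln (2 : R) by apply: ln_gt0; rewrite ltr1n.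
rewrite /log2 ler_pdivrMr //.
have h : (m%:R : R) <= 2 ^+ m by rewrite -natrX ler_nat ltnW // ltn_expl.
have m0 : (0 : R) < m%:R by rewrite ltr0n; exact: leq_trans m2.
have P x : (0:R) < x -> x \in Num.pos by rewrite posrE.
have h2 : (0:R) < 2 by rewrite ltr0n.
have hl : ln (m%:R : R) <= ln (2 ^+ m).
  by rewrite (ler_ln (P _ m0) (P _ (exprn_gt0 m h2))).
by apply: le_trans hl _; rewrite (lnXn _ h2) mulr_natl.
Qed.

Lemma ar3 (R : realFieldType) (a b lL lm : R) :
  - `|b| * lL <= b * lL -> `|b| * lL <= `|b| * lm -> - (a + `|b|) * lm <= b * lL - a * lm.
Proof. move=> *; lra. Qed.

Lemma LB (R : realType) (m : nat) (alpha beta : R) : (2 <= m)%N ->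
  m%:R `^ (- (alpha + `|beta|)) <= (log2 (m%:R : R) `^ beta) / (m%:R `^ alpha).
Proof.
move=> m2.
have m0 : (0 : R) < m%:R by rewrite ltr0n; exact: leq_trans m2.
have L1 := log2_ge1 R m2; have L2 := log2_le R m2.
have L0 : (0:R) < log2 (m%:R : R) by apply: lt_le_trans L1; rewrite ltr01.
have P x : (0:R) < x -> x \in Num.pos by rewrite posrE.
rewrite !powRE' // -expRB ler_expR.
have lL0 : 0 <= ln (log2 (m%:R : R)) by exact: ln_ge0.
have lLm : ln (log2 (m%:R : R)) <= ln (m%:R : R) by rewrite (ler_ln (P _ L0) (P _ m0)).
apply: ar3.
  apply: (ler_wpM2r lL0); rewrite lerNl -normrN; exact: ler_norm.
exact: (ler_wpM2l (normr_ge0 _) lLm).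
Qed.

Lemma lnm_bound (R : realType) (q n : nat) : (2 <= n)%N ->
  ln ((n * (q * n + 3))%:R : R) <= ln ((q + 3)%:R : R) + 2 * ln (n%:R : R).
Proof.
move=> n2.
have P x : (0:R) < x -> x \in Num.pos by rewrite posrE.
have n0 : (0 < n)%N by apply: leq_trans n2.
have n0' : (0 : R) < n%:R by rewrite ltr0n.
have q3 : (0:R) < (q + 3)%:R by rewrite ltr0n addn_gt0 orbT.
have m0 : (0:R) < (n * (q * n + 3))%:R by rewrite ltr0n muln_gt0 n0 addn_gt0 orbT.
have nn : (0:R) < n%:R * n%:R := mulr_gt0 n0' n0'.
have -> : 2 * ln (n%:R : R) = ln n%:R + ln n%:R by ring.
rewrite -(lnM (P _ n0') (P _ n0')) -(lnM (P _ q3) (P _ nn)).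
rewrite (ler_ln (P _ m0) (P _ (mulr_gt0 q3 nn))) -!natrM ler_nat.
rewrite mulnDr mulnDl mulnCA leq_add2l mulnC leq_mul2l /= leq_pmulr //.
Qed.

Lemma log2m_bound (R : realType) (q n : nat) : (2 <= n)%N ->
  log2 ((n * (q * n + 3))%:R : R) <= (log2 ((q + 3)%:R : R) + 2) * log2 (n%:R : R).
Proof.
move=> n2.
have ln2 : 0 < ln (2 : R) by apply: ln_gt0; rewrite ltr1n.
have h := lnm_bound R q n2.
have a0 : 1 <= log2 ((q + 3)%:R : R) by apply: log2_ge1; apply: (leq_trans _ (leq_addl q 3)).
have b1 := log2_ge1 R n2.
have e1 : log2 ((n * (q * n + 3))%:R : R) <= log2 ((q + 3)%:R : R) + 2 * log2 (n%:R : R).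
  have -> : log2 ((q + 3)%:R : R) + 2 * log2 (n%:R : R) =
      (ln ((q + 3)%:R : R) + 2 * ln (n%:R : R)) / ln 2.
    by rewrite /log2; field; exact: lt0r_neq0.
  by rewrite /log2 ler_pM2r ?invr_gt0.
apply: le_trans e1 _.
have a0' : 0 <= log2 ((q + 3)%:R : R) by apply: le_trans a0; rewrite ler01.
have := ler_wpM2l a0' b1; rewrite mulr1 => h'.
move: h'; clear; move: (log2 ((q + 3)%:R : R)) (log2 (n%:R : R)) => a b h'; lra.
Qed.

Lemma FB (R : realType) (q n : nat) (c1 alpha beta : R) : (2 <= n)%N -> 0 < c1 -> 0 <= alpha ->
  c1 / 2 * (log2 ((q + 3)%:R : R) + 2) `^ (- `|beta|) / ((q + 3)%:R `^ alpha)
     * (log2 (n%:R : R) `^ beta) / (n%:R `^ (2 * alpha))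
   <= c1 * (log2 ((n * (q * n + 3))%:R : R) `^ beta) / ((n * (q * n + 3))%:R `^ alpha) / 2.
Proof.
move=> n2 c0 a0.
set m := (n * (q * n + 3))%N.
have P x : (0:R) < x -> x \in Num.pos by rewrite posrE.
have n0 : (0 < n)%N by apply: leq_trans n2.
have n0' : (0 : R) < n%:R by rewrite ltr0n.
have q3 : (0:R) < (q + 3)%:R by rewrite ltr0n addn_gt0 orbT.
have m2 : (2 <= m)%N.
  by apply: leq_trans n2 _; rewrite /m leq_pmulr // addn_gt0 orbT.
have m0 : (0:R) < m%:R by rewrite ltr0n; exact: leq_trans m2.
have Lq1 : 1 <= log2 ((q + 3)%:R : R) by apply: log2_ge1; apply: (leq_trans _ (leq_addl q 3)).
have Lq0 : (0:R) < log2 ((q + 3)%:R : R) + 2.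
  by apply: ltr_wpDl; [apply: le_trans Lq1; rewrite ler01 | rewrite ltr0n].
have Ln1 := log2_ge1 R n2.
have Lm1 := log2_ge1 R m2.
have Ln0 : (0:R) < log2 (n%:R : R) by apply: lt_le_trans Ln1; rewrite ltr01.
have Lm0 : (0:R) < log2 (m%:R : R) by apply: lt_le_trans Lm1; rewrite ltr01.
rewrite (powRE' _ Lq0) (powRE' _ q3) (powRE' _ Ln0) (powRE' _ n0') (powRE' _ Lm0) (powRE' _ m0).
set A := - `|beta| * ln (log2 ((q + 3)%:R : R) + 2).
set B := alpha * ln ((q + 3)%:R : R).
set Cc := beta * ln (log2 (n%:R : R)).
set Dd := 2 * alpha * ln (n%:R : R).
set E1 := beta * ln (log2 (m%:R : R)).
set F := alpha * ln (m%:R : R).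
have ne x : expR x != 0 :> R by rewrite gt_eqF // expR_gt0.
have -> : c1 / 2 * expR A / expR B * expR Cc / expR Dd = c1 / 2 * expR (A - B + Cc - Dd).
  rewrite expRB expRD expRB; field; rewrite ?ne //.
have -> : c1 * expR E1 / expR F / 2 = c1 / 2 * expR (E1 - F).
  rewrite expRB; field; rewrite ?ne //.
rewrite ler_pM2l ?divr_gt0 ?ltr0n // ler_expR.
have K1 : F <= B + Dd.
  have e : B + Dd = alpha * (ln ((q + 3)%:R : R) + 2 * ln (n%:R : R)) by rewrite /B /Dd; ring.
  rewrite e; apply: (ler_wpM2l a0); exact: lnm_bound.
have ha : ln (log2 (n%:R : R)) <= ln (log2 (m%:R : R)).
  rewrite (ler_ln (P _ Ln0) (P _ Lm0)) /log2 ler_pM2r ?invr_gt0; last by apply: ln_gt0; rewrite ltr1n.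
  by rewrite (ler_ln (P _ n0') (P _ m0)) ler_nat /m leq_pmulr // addn_gt0 orbT.
have hb : ln (log2 (m%:R : R)) <= ln (log2 ((q + 3)%:R : R) + 2) + ln (log2 (n%:R : R)).
  rewrite -(lnM (P _ Lq0) (P _ Ln0)) (ler_ln (P _ Lm0) (P _ (mulr_gt0 Lq0 Ln0))).
  exact: log2m_bound.
have hc : 0 <= ln (log2 ((q + 3)%:R : R) + 2).
  apply: ln_ge0; apply: le_trans Lq1 _; rewrite lerDl ler0n //.
have K2 : A + Cc <= E1.
  rewrite /A /Cc /E1.
  have [hbeta|hbeta] := leP 0 beta.
    rewrite ger0_norm //.
    have h1 : beta * ln (log2 (n%:R : R)) <= beta * ln (log2 (m%:R : R)) by exact: (ler_wpM2l hbeta).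
    have h2 : 0 <= beta * ln (log2 ((q + 3)%:R : R) + 2) by exact: mulr_ge0.
    rewrite mulNr addrC; apply: le_trans _ h1; rewrite lerBlDr lerDl; exact: h2.
  rewrite ltr0_norm // opprK.
  have h1 : beta * (ln (log2 ((q + 3)%:R : R) + 2) + ln (log2 (n%:R : R))) <= beta * ln (log2 (m%:R : R)).
    by apply: (ler_wnM2l (ltW hbeta)).
  by rewrite mulrDr in h1.
move: K1 K2; clear; move: A B Cc Dd E1 F => a b c d e f; lra.
Qed.

Lemma partI (R : realType) (X : normedModType R) (K : set X) (delta lambda C' : R) :
  compact K -> 1 < lambda -> 0 < C' ->
  forall c1 alpha beta : R, 0 < c1 -> 0 <= alpha ->
  (forall n : nat, (2 <= n)%N -> entropy_number K n > c1 * (log2 n%:R `^ beta) / (n%:R `^ alpha)) ->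
  exists2 C : R, 0 < C & forall n : nat, (2 <= n)%N ->
     lip_width K (C' * (n%:R `^ delta) * lambda ^+ n) n >= C * (log2 n%:R `^ beta) / (n%:R `^ (2 * alpha)).
Proof.
move=> cK l1 C0 c1 alpha beta c10 a0 H.
set s := alpha + `|beta|.
have s0 : 0 <= s by apply: addr_ge0 a0 (normr_ge0 _).
have h2 : (0:R) < 2 by rewrite ltr0n.
have c2 : 0 < c1 / 2 by apply: divr_gt0 c10 h2.
have [q hq] := AN delta C0 l1 c2 s0.
have q3 : (0:R) < (q + 3)%:R by rewrite ltr0n addn_gt0 orbT.
have Lq1 : 1 <= log2 ((q + 3)%:R : R) by apply: log2_ge1; apply: (leq_trans _ (leq_addl q 3)).
have Lq0 : (0:R) < log2 ((q + 3)%:R : R) + 2.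
  by apply: ltr_wpDl; [apply: le_trans Lq1; rewrite ler01 | rewrite ltr0n].
exists (c1 / 2 * (log2 ((q + 3)%:R : R) + 2) `^ (- `|beta|) / ((q + 3)%:R `^ alpha)).
  by apply: divr_gt0; [apply: mulr_gt0 c2 (powR_gt0 _ Lq0) | exact: powR_gt0].
move=> n n2.
set m := (n * (q * n + 3))%N.
have n0 : (0 < n)%N by apply: leq_trans n2.
have n0' : (0 : R) < n%:R by rewrite ltr0n.
have m2 : (2 <= m)%N.
  by apply: leq_trans n2 _; rewrite /m leq_pmulr // addn_gt0 orbT.
have m0 : (0:R) < m%:R by rewrite ltr0n; exact: leq_trans m2.
have l0 : 0 < lambda by apply: lt_trans l1; rewrite ltr01.
have g0 : 0 <= C' * (n%:R `^ delta) * lambda ^+ n.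
  by apply: mulr_ge0; [apply: mulr_ge0; [exact: ltW | exact: powR_ge0] | exact: ltW (exprn_gt0 _ l0)].
have hc := core (q * n) cK g0 n0.
have hH := H m m2.
have hE := hq n n2.
have TLB := LB alpha beta m2.
set T := c1 * (log2 (m%:R : R) `^ beta) / (m%:R `^ alpha) in hH *.
have Lm0 : (0:R) < log2 (m%:R : R) by apply: lt_le_trans (log2_ge1 R m2); rewrite ltr01.
have T0 : 0 < T by rewrite /T; apply: divr_gt0; [apply: mulr_gt0 c10 (powR_gt0 _ Lm0) | exact: powR_gt0].
have TLB' : c1 * m%:R `^ (- s) <= T by rewrite /T -mulrA; exact: (ler_wpM2l (ltW c10) TLB).
have hmax := lt_le_trans hH hc.
rewrite lt_max in hmax.
case/orP: hmax => hmax; last by move: (lt_trans hmax T0); rewrite ltxx.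
apply: le_trans (FB q beta n2 c10 a0) _; rewrite -/m -/T.
move: hmax hE TLB'.
set D := lip_width _ _ _.
set E := 2 * n%:R * _ / _.
set Z := m%:R `^ (- s).
move=> hmax hE TLB'.
have e : c1 / 2 * Z = (c1 * Z) / 2 by rewrite mulrAC.
rewrite e in hE.
move: hmax hE TLB'; clearbody D E Z T; clear; move: D E Z T c1 => d e z t c. lra.
Qed.

End Helpers.

Theorem theorem7p3 (R : realType) (X : completeNormedModType R) (K : set X)
  (delta lambda C' : R) :
  compact K -> 1 < lambda -> 0 < C' ->
  let gamma := fun n : nat => C' * (n%:R `^ delta) * lambda ^+ n in
  (forall c1 alpha beta : R, 0 < c1 -> 0 < alpha ->
     (forall n : nat, (2 <= n)%N ->
        entropy_number K n > c1 * (log2 n%:R `^ beta) / (n%:R `^ alpha)) ->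
     exists2 C : R, 0 < C &
       forall n : nat, (2 <= n)%N ->
         lip_width K (gamma n) n >= C * (log2 n%:R `^ beta) / (n%:R `^ (2 * alpha)))
  /\
  (forall c1 alpha : R, 0 < c1 -> 0 < alpha ->
     (forall n : nat, (2 <= n)%N ->
        entropy_number K n > c1 * (log2 n%:R `^ (- alpha))) ->
     exists2 C : R, 0 < C &
       forall n : nat, (2 <= n)%N ->
         lip_width K (gamma n) n >= C * (log2 n%:R `^ (- alpha))).
Proof.
move=> cK l1 C0 gamma; rewrite /gamma; split.
  move=> c1 alpha beta c10 a0 H.
  exact: (partI delta cK l1 C0 c10 (ltW a0) H).
move=> c1 alpha c10 a0 H.
have H' : forall n : nat, (2 <= n)%N ->
    entropy_number K n > c1 * (log2 n%:R `^ (- alpha)) / (n%:R `^ 0).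
  by move=> n n2; rewrite powRr0 divr1; exact: H.
have [C C0' hC] := partI delta cK l1 C0 c10 (lexx 0) H'.
exists C => // n n2; have := hC n n2; by rewrite mulr0 powRr0 divr1.
Qed.
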